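(* Let $q\ge2$ be an integer, $[q]=\{0,\dots,q-1\}$, and let $X_{\mathrm{rep}}=\{(\dots,a,a,a,\dots): a\in[q]\}\subseteq[q]^{\mathbb{Z}}$ be the $q$-ary repetition system. Let $\mu^{\mathsf{u}}$ be the uniform Bernoulli i.i.d. measure on $[q]^{\mathbb{Z}}$. Then \[R_0(X_{\mathrm{rep}},[q]^{\mathbb{Z}},\mu^{\mathsf{u}})=R(X_{\mathrm{rep}},[q]^{\mathbb{Z}})=1-\frac1q.\]
   Context: For a shift space $X\subseteq\Sigma^{\mathbb{Z}}$, $\mathscr{B}_n(X)$ is the set of length-$n$ words appearing as consecutive subwords of elements of $X$ (so $\mathscr{B}_n([q]^{\mathbb{Z}})=[q]^n$). $d$ is the Hamming distance and $B_r(\overline{x})$ the Hamming ball of radius $r$. For $A,C\subseteq\Sigma^n$: $R(C,A)=\max_{\overline{y}\in A}\min_{\overline{x}\in C}d(\overline{x},\overline{y})$, and for a probability measure $\eta$ on $\Sigma^n$ and $\varepsilon>0$, $R_\varepsilon(C,A,\eta)=\min\{r\in\mathbb{Z}_{\ge0}:\eta(A\cap\bigcup_{\overline{x}\in C}B_r(\overline{x}))\ge1-\varepsilon\}$. For shift spaces $X,Y$: $R(X,Y)=\liminf_n\frac1nR(\mathscr{B}_n(X),\mathscr{B}_n(Y))$. For a shift-invariant ergodic probability measure $\mu$ on $Y$, with $\mu_n$ its marginal on coordinates $0,\dots,n-1$: $R_\varepsilon(X,Y,\mu)=\liminf_n\frac1nR_\varepsilon(\mathscr{B}_n(X),\mathscr{B}_n(Y),\mu_n)$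 and the essential covering radius is $R_0(X,Y,\mu)=\lim_{\varepsilon\to0}R_\varepsilon(X,Y,\mu)$. *)

(* Defs.v *)
From HB Require Import structures.
From mathcomp Require Import all_boot all_order all_algebra.
From mathcomp Require Import all_classical all_reals all_analysis.
Set Implicit Arguments. Unset Strict Implicit. Unset Printing Implicit Defensive.
Import Order.TTheory GRing.Theory Num.Theory.
Local Open Scope ring_scope.

(* Alphabet [q] = 'I_q; configurations of [q]^Z are functions int -> 'I_q;
   words of length n are finite functions 'I_n -> 'I_q. *)
Definition config (q : nat) := int -> 'I_q.
Definition word (q n : nat) := {ffun 'I_n -> 'I_q}.

Definition hamming (q n : nat) (x y : word q n) : nat := #|[set i | x i != y i]|.

Definition lang (q n : nat) (X : set (config q)) : {set word q n} :=
  [set w : word q n | `[< exists x, X x /\ exists i : int,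
                            forall k : 'I_n, w k = x (i + (k : nat)%:Z) >] ].

Definition full_shift (q : nat) : set (config q) := setT.
Definition rep_system (q : nat) : set (config q) :=
  [set x | exists a : 'I_q, forall i, x i = a].

(* R(C,A) = max_{y in A} min_{x in C} d(x,y)  (min over empty C defaults to n) *)
Definition cov_radius (q n : nat) (C A : {set word q n}) : nat :=
  \max_(y in A) \big[minn/n]_(x in C) hamming x y.

Definition near_set (q n : nat) (C : {set word q n}) (r : nat) (y : word q n) : bool :=
  [exists x in C, (hamming x y <= r)%N].

(* R_eps(C,A,eta) = min{ r >= 0 : eta(A ∩ ∪_{x∈C} B_r(x)) >= 1 - eps };
   for eps > 0 and a probability vector eta, r = n always qualifies (when C is
   nonempty), so the minimum can be taken over r <= n (default n). *)
Definition ess_cov_radius (R : realType) (q n : nat) (C A : {set word q n})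
    (eta : word q n -> R) (eps : R) : nat :=
  \big[minn/n]_(r < n.+1 |
      (1 - eps <= \sum_(y in A | near_set C r y) eta y)) (r : nat).

Definition shift_cov_radius (R : realType) (q : nat) (X Y : set (config q)) : R :=
  limn_inf (fun n => (cov_radius (lang n X) (lang n Y))%:R / n%:R).

(* R_eps(X,Y,mu) = liminf_n R_eps(B_n X, B_n Y, mu_n)/n, with mu given by
   its family of marginals mu_n on coordinates 0..n-1 *)
Definition shift_ess_cov_radius (R : realType) (q : nat) (X Y : set (config q))
    (mu : forall n, word q n -> R) (eps : R) : R :=
  limn_inf (fun n => (ess_cov_radius (lang n X) (lang n Y) (mu n) eps)%:R / n%:R).

(* marginals of the uniform Bernoulli i.i.d. measure on [q]^Z:
   mu_n(w) = q^{-n} for every word w of length n *)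
Definition uniform_marginal (R : realType) (q n : nat) (w : word q n) : R :=
  (q%:R ^+ n)^-1.

Arguments rep_system q : clear implicits.
Arguments full_shift q : clear implicits.

(* Main.v *)
Set Warnings "-all".
Set Implicit Arguments. Unset Strict Implicit.
Require Import Defs.
From HB Require Import structures.
From mathcomp Require Import all_boot all_order all_algebra.
From mathcomp Require Import all_classical all_reals all_analysis.
From mathcomp Require Import zify ring lra.
Import Order.TTheory GRing.Theory Num.Theory.
Local Open Scope classical_set_scope.
Local Open Scope ring_scope.

Section Comb.
Variables (q : nat) (hq : (2 <= q)%N).

Let q0 : (0 < q)%N. Proof. by apply: leq_trans hq. Qed.
Definition a0 : 'I_q := Ordinal q0.

Definition cw n (a : 'I_q) : word q n := [ffun=> a].
Definition cnt n (y : word q n) (a : 'I_q) : nat := #|[set i | y i == a]%SET|.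

Lemma lang_rep n (w : word q n) :
  (w \in lang n (rep_system q)) = [exists a, w == cw n a].
Proof.
rewrite inE; apply/asboolP/existsP.
- move=> [x [[a xa] [i hi]]]; exists a; apply/eqP/ffunP => k.
  by rewrite hi xa ffunE.
- move=> [a /eqP ->]; exists (fun _ => a); split; first by exists a.
  by exists 0%R => k; rewrite ffunE.
Qed.

Lemma cw_in n a : cw n a \in lang n (rep_system q).
Proof. by rewrite lang_rep; apply/existsP; exists a. Qed.

Lemma lang_full n (w : word q n) : w \in lang n (full_shift q).
Proof.
rewrite inE; apply/asboolP.
exists (fun i : int => if insub (absz i) is Some k then w k else a0).
split => //; exists 0%R => k; rewrite add0r /=.
by rewrite (valK k).
Qed.

Lemma hamming_cw n a (y : word q n) : hamming (cw n a) y = (n - cnt y a)%N.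
Proof.
rewrite /hamming /cnt.
transitivity #|~: [set i | y i == a]|.
  by apply: eq_card => i; rewrite !inE ffunE eq_sym.
by rewrite [LHS]cardsCs finset.setCK card_ord.
Qed.

Lemma cnt_le n (y : word q n) a : (cnt y a <= n)%N.
Proof. by rewrite /cnt -[X in (_ <= X)%N](card_ord n) max_card. Qed.

Lemma cntE n (y : word q n) a : cnt y a = \sum_i (y i == a : nat).
Proof. by rewrite /cnt -sum1_card big_mkcond /=; apply: eq_bigr => i _; rewrite inE; case: (_ == _). Qed.

Lemma sum_cnt n (y : word q n) : \sum_a cnt y a = n.
Proof.
under eq_bigr do rewrite cntE.
rewrite exchange_big /= -[RHS](card_ord n) -sum1_card.
apply: eq_bigr => i _.
rewrite (bigD1 (y i)) //= eqxx big1 // => a /negPf; rewrite eq_sym => ->; done.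
Qed.

Lemma pigeon n (y : word q n) : exists a, (n <= q * cnt y a)%N.
Proof.
case: (@arg_maxnP _ a0 xpredT (cnt y) isT) => a _ ha.
exists a; rewrite -{1}(sum_cnt y).
rewrite -[X in (X * _)%N](card_ord q) -sum_nat_const.
by apply: leq_sum => i _; exact: ha.
Qed.


Lemma card_pair n (i j : 'I_n) : i != j ->
  (q * #|[set y : word q n | y i == y j]%SET| = q ^ n)%N.
Proof.
move=> ij.
have h1 : #|[set y : word q n | y i == y j]%SET| =
   \sum_(a : 'I_q) #|[set y : word q n | (y i == a) && (y j == a)]%SET|.
  rewrite -sum1_card big_mkcond /=.
  under [RHS]eq_bigr do rewrite -sum1_card big_mkcond /=.
  rewrite exchange_big /=; apply: eq_bigr => y _.
  rewrite (bigD1 (y i)) //= !inE eqxx big1 ?addn0.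
    by rewrite eq_sym; case: (_ == _).
  by move=> a ha; rewrite inE; case: eqP => //= e; rewrite -e eqxx in ha.
pose F (a : 'I_q) (x : 'I_n) : pred 'I_q :=
  if (x == i) || (x == j) then pred1 a else predT.
have h2 a : #|[set y : word q n | (y i == a) && (y j == a)]%SET| =
            #|(family (F a) : simpl_pred (word q n))|.
  apply: eq_card => y; rewrite inE; apply/andP/familyP.
    move=> [/eqP yi /eqP yj] x; rewrite /F; case: eqP => [->|_] /=.
      by rewrite inE yi.
    by case: eqP => [->|_] //=; rewrite inE yj.
  move=> hy; split.
    by have := hy i; rewrite /F eqxx.
  by have := hy j; rewrite /F eqxx orbT.
have h3 a : #|(family (F a) : simpl_pred (word q n))| =
            (q ^ #|[pred x : 'I_n | ~~ ((x == i) || (x == j))]|)%N.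
  rewrite (card_family (F a)) foldrE /image_mem big_map big_enum /=.
  rewrite -prod_nat_const [in RHS]big_mkcond /=.
  apply: eq_bigr => x _; rewrite /F inE.
  by case: ifP => _ /=; rewrite ?card1 ?card_ord.
have h4 : (#|[pred x : 'I_n | ~~ ((x == i) || (x == j))]| + 2 = n)%N.
  rewrite -[RHS](card_ord n) -(cardC (pred2 i j)) card2 ij.
  rewrite addnC; congr (_ + _)%N; apply: eq_card => x; done.
rewrite h1; under eq_bigr do rewrite h2 h3.
rewrite sum_nat_const card_ord.
set m := #|_|; rewrite -[in RHS]h4 expnD.
rewrite -/m (expnS q 1) expn1 mulnA mulnC; done.
Qed.

Lemma card_words n : #|word q n| = (q ^ n)%N.
Proof. by rewrite card_ffun !card_ord. Qed.

Lemma sum_sq n :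
  (q * \sum_(y : word q n) \sum_a (cnt y a) ^ 2 <= q ^ n * (n * q + n * n))%N.
Proof.
have e1 (y : word q n) :
    (\sum_a (cnt y a) ^ 2 = \sum_i \sum_j (y i == y j : nat))%N.
  under eq_bigr do rewrite cntE expnS expn1 big_distrlr /=.
  rewrite exchange_big; apply: eq_bigr => i _.
  rewrite exchange_big; apply: eq_bigr => j _ /=.
  rewrite (bigD1 (y i)) //= eqxx big1 => [|a ha].
    by rewrite addn0 mul1n eq_sym.
  by case: eqP => // e; rewrite e eqxx in ha.
under eq_bigr do rewrite e1.
rewrite exchange_big /=.
under eq_bigr do rewrite exchange_big /=.
have e2 (i j : 'I_n) : (\sum_(y : word q n) (y i == y j : nat)
    = #|[set y : word q n | y i == y j]%SET|)%N.
  rewrite -sum1_card [RHS]big_mkcond /=; apply: eq_bigr => y _.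
  by rewrite inE.
rewrite (eq_bigr (fun i => \sum_j #|[set y : word q n | y i == y j]%SET|)%N);
  last by move=> i _; apply: eq_bigr => j _; exact: e2.
rewrite big_distrr /=.
apply: (@leq_trans (\sum_(i < n) (q * q ^ n + n * q ^ n))%N).
  apply: leq_sum => i _.
  rewrite big_distrr /= (bigD1 i) //=.
  have -> : #|[set y : word q n | y i == y i]%SET| = (q ^ n)%N.
    by rewrite -card_words; apply: eq_card => y; rewrite inE eqxx.
  rewrite leq_add2l.
  apply: (@leq_trans (\sum_(j < n | j != i) q ^ n)%N).
    by apply: leq_sum => j ji; rewrite card_pair // eq_sym.
  apply: (@leq_trans (\sum_(j < n) q ^ n)%N).
    by rewrite [X in (_ <= X)%N](bigD1 i) //= leq_addl.
  by rewrite sum_nat_const card_ord.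
rewrite sum_nat_const card_ord.
by apply/eqP; lia.
Qed.

Lemma bigmin_le (I : finType) (P : pred I) (F : I -> nat) d i0 :
  P i0 -> (\big[minn/d]_(i | P i) F i <= F i0)%N.
Proof.
move=> Pi; move: (mem_index_enum i0); elim: (index_enum I) => [//|j r IH].
rewrite inE big_cons => /orP[/eqP <-|/IH h]; first by rewrite Pi geq_minl.
by case: ifP => _ //; apply: leq_trans (geq_minr _ _) h.
Qed.

Lemma bigmin_ge (I : finType) (P : pred I) (F : I -> nat) d m :
  (m <= d)%N -> (forall i, P i -> m <= F i)%N -> (m <= \big[minn/d]_(i | P i) F i)%N.
Proof.
move=> md hF; apply: (big_ind (fun x => m <= x)%N) => //.
by move=> x y hx hy; rewrite leq_min hx hy.
Qed.

Lemma bigmin_ex (I : finType) (P : pred I) (F : I -> nat) d i0 :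
  P i0 -> (forall i, P i -> F i <= d)%N ->
  exists2 i, P i & (F i <= \big[minn/d]_(i | P i) F i)%N.
Proof.
move=> Pi0 hd; apply: (big_ind (fun x => exists2 i, P i & F i <= x)%N).
- by exists i0 => //; apply: hd.
- move=> x y [i Pi hi] [j Pj hj]; case: (leqP x y) => xy.
    by exists i => //; rewrite (minn_idPl xy).
  by exists j => //; rewrite (minn_idPr (ltnW xy)).
- by move=> i Pi; exists i.
Qed.

Notation C n := (lang n (rep_system q)).
Notation Y n := (lang n (full_shift q)).

Lemma near_cnt n r (y : word q n) :
  near_set (C n) r y -> exists a, (n <= r + cnt y a)%N.
Proof.
move=> /existsP[x /andP[xC hx]]; move: xC; rewrite lang_rep => /existsP[a /eqP xa].
exists a; move: hx; rewrite xa hamming_cw; lia.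
Qed.

Lemma cw_near n r (y : word q n) a : (n <= r + cnt y a)%N -> near_set (C n) r y.
Proof.
move=> h; apply/existsP; exists (cw n a); rewrite cw_in /= hamming_cw; lia.
Qed.

Lemma hamming_le n (x y : word q n) : (hamming x y <= n)%N.
Proof. by rewrite /hamming -[X in (_ <= X)%N](card_ord n) max_card. Qed.

Lemma cov_le n : (q * cov_radius (C n) (Y n) <= (q - 1) * n)%N.
Proof.
rewrite /cov_radius.
have : (\max_(y in Y n) \big[minn/n]_(x in C n) hamming x y <= ((q - 1) * n) %/ q)%N.
  apply/bigmax_leqP => y _.
  have [a ha] := pigeon y.
  apply: (leq_trans (bigmin_le _ _ (cw_in n a))).
  rewrite hamming_cw leq_divRL //.
  have := cnt_le y a; nia.
rewrite leq_divRL // mulnC; done.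
Qed.

Lemma cov_le_n n : (cov_radius (C n) (Y n) <= n)%N.
Proof. have := cov_le n; nia. Qed.

Lemma all_near n (y : word q n) : near_set (C n) (cov_radius (C n) (Y n)) y.
Proof.
have [x xC hx] := @bigmin_ex _ (fun x => x \in C n) (fun x => hamming x y) n
   (cw n a0) (cw_in n a0) (fun x _ => hamming_le x y).
apply/existsP; exists x; rewrite xC /=.
apply: (leq_trans hx); rewrite /cov_radius.
exact: (@leq_bigmax_cond _ (fun y => y \in Y n) _ y (lang_full y)).
Qed.

Variable R : realType.
Notation Q := (q%:R : R).
Notation mu n := (@uniform_marginal R q n).

Lemma Q_gt0 : 0 < Q. Proof. by rewrite ltr0n. Qed.
Lemma Q_ge2 : 2 <= Q. Proof. by rewrite (ler_nat R 2 q). Qed.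

Lemma sum_mu n : \sum_(y : word q n) mu n y = 1.
Proof.
rewrite /uniform_marginal sumr_const.
rewrite -[X in _ *+ X]/#|word q n| card_words.
rewrite -(mulr_natl (Q ^- n)) natrX mulfV // expf_neq0 //.
by rewrite gt_eqF // Q_gt0.
Qed.

Lemma E_le_R n eps : 0 <= eps ->
  (ess_cov_radius (C n) (Y n) (mu n) eps <= cov_radius (C n) (Y n))%N.
Proof.
move=> e0; rewrite /ess_cov_radius.
have hr : (cov_radius (C n) (Y n) < n.+1)%N by rewrite ltnS cov_le_n.
apply: (leq_trans (bigmin_le _ _ (i0 := Ordinal hr) _)) => //=.
rewrite (eq_bigl xpredT); last by move=> y; rewrite lang_full all_near.
by rewrite sum_mu lerBlDr lerDl.
Qed.

Lemma Rc_real n :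
  ((cov_radius (C n) (Y n))%:R <= (1 - Q^-1) * n%:R :> R).
Proof.
have h := cov_le n.
have h' : Q * (cov_radius (C n) (Y n))%:R <= (Q - 1) * n%:R.
  by rewrite -natrM -(natrB _ (ltnW hq)) -natrM ler_nat.
have -> : (1 - Q^-1) * n%:R = Q^-1 * ((Q - 1) * n%:R).
  by field; rewrite gt_eqF // Q_gt0.
by rewrite ler_pdivlMl // Q_gt0.
Qed.

Lemma sumD n (y : word q n) :
  \sum_a ((cnt y a)%:R - n%:R / Q) ^+ 2 =
  (\sum_a (cnt y a) ^ 2)%:R - n%:R ^+ 2 / Q :> R.
Proof.
set m := n%:R / Q.
rewrite (eq_bigr (fun a => (cnt y a)%:R ^+ 2 - (2 * m) * (cnt y a)%:R + m ^+ 2));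
  last by move=> a _; ring.
rewrite big_split sumrB /= -mulr_sumr sumr_const card_ord -natr_sum sum_cnt.
rewrite natr_sum; under [in RHS]eq_bigr do rewrite natrX.
by rewrite /m; field; rewrite gt_eqF // Q_gt0.
Qed.

Lemma sum_S n :
  \sum_(y : word q n) ((\sum_a (cnt y a) ^ 2)%:R : R) <=
  Q ^+ n * (n%:R * Q + n%:R * n%:R) / Q.
Proof.
have h := sum_sq n.
rewrite -natr_sum mulrC ler_pdivlMl ?Q_gt0 //.
by rewrite -natrX -!natrM -natrD -natrM ler_nat.
Qed.

Lemma mu_ge0 n (y : word q n) : 0 <= mu n y.
Proof. by rewrite /uniform_marginal invr_ge0 exprn_ge0 // ler0n. Qed.

Lemma cheb n r (d : R) : 0 < d -> (0 < n)%N ->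
  r%:R <= (1 - Q^-1 - d) * n%:R ->
  \sum_(y in Y n | near_set (C n) r y) mu n y <= (d ^+ 2 * n%:R)^-1.
Proof.
move=> d0 n0 hr.
have N0 : 0 < (n%:R : R) by rewrite ltr0n.
set N := (n%:R : R) in N0 hr *.
set D := fun y : word q n => \sum_a ((cnt y a)%:R - N / Q) ^+ 2.
set K := (d * N) ^+ 2.
have K0 : 0 < K by rewrite exprn_gt0 // mulr_gt0.
have iQ0 : 0 < Q^-1 by rewrite invr_gt0 Q_gt0.
have Dge y : near_set (C n) r y -> K <= D y.
  move=> /near_cnt [a ha].
  have ha' : N <= r%:R + (cnt y a)%:R by rewrite -natrD ler_nat.
  have h1 : d * N <= (cnt y a)%:R - N / Q.
    rewrite mulrC in hr *; rewrite [N / Q]mulrC. nra.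
  have h2 : K <= ((cnt y a)%:R - N / Q) ^+ 2.
    rewrite /K; have : 0 <= d * N by rewrite mulr_ge0 // ltW. nra.
  apply: (le_trans h2); rewrite /D (bigD1 a) //= lerDl.
  by apply: sumr_ge0 => b _; exact: sqr_ge0.
apply: (@le_trans _ _ (\sum_(y in Y n | near_set (C n) r y) mu n y * (D y / K))).
  apply: ler_sum => y /andP[_ hy].
  rewrite -[X in X <= _]mulr1 ler_wpM2l ?mu_ge0 //.
  by rewrite ler_pdivlMr // mul1r; exact: Dge.
have DK0 y : 0 <= mu n y * (D y / K).
  rewrite mulr_ge0 ?mu_ge0 // divr_ge0 ?(ltW K0) //.
  by apply: sumr_ge0 => b _; exact: sqr_ge0.
apply: (@le_trans _ _ (\sum_(y : word q n) mu n y * (D y / K))).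
  rewrite [X in _ <= X](bigID (fun y => (y \in Y n) && near_set (C n) r y)) /=.
  by rewrite lerDl sumr_ge0.
have -> : \sum_(y : word q n) mu n y * (D y / K) = Q ^- n / K * \sum_y D y.
  by rewrite mulr_sumr; apply: eq_bigr => y _; rewrite /uniform_marginal; ring.
have -> : \sum_y D y = \sum_(y : word q n) ((\sum_a (cnt y a) ^ 2)%:R - N ^+ 2 / Q).
  by apply: eq_bigr => y _; rewrite /D sumD.
rewrite sumrB sumr_const card_words.
apply: (@le_trans _ _ (Q ^- n / K * (Q ^+ n * (N * Q + N * N) / Q - (N ^+ 2 / Q) *+ (q ^ n)))).
  apply: ler_wpM2l; first by rewrite divr_ge0 ?(ltW K0) // invr_ge0 exprn_ge0 // ltW // Q_gt0.
  by rewrite lerD2r; exact: sum_S.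
rewrite -(mulr_natr (N ^+ 2 / Q)) natrX /K le_eqVlt; apply/orP; left; apply/eqP.
field.
by rewrite (gt_eqF N0) (gt_eqF d0) (gt_eqF Q_gt0) expf_neq0 // (gt_eqF Q_gt0).
Qed.

Lemma E_lower n eps (d : R) : 0 < d -> eps < 2^-1 -> 2 < d ^+ 2 * n%:R ->
  (1 - Q^-1 - d) * n%:R <= (ess_cov_radius (C n) (Y n) (mu n) eps)%:R.
Proof.
move=> d0 he hn.
have n0 : (0 < n)%N.
  by case: n hn => [|n'] //; rewrite mulr0 => h; exfalso; lra.
have iQ0 : 0 < Q^-1 by rewrite invr_gt0 Q_gt0.
have N0 : 0 <= (n%:R : R) by rewrite ler0n.
rewrite /ess_cov_radius.
apply: (big_ind (fun x : nat => (1 - Q^-1 - d) * n%:R <= x%:R)).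
- nra.
- by move=> x y hx hy /=; case: (leqP x y).
- move=> r hr; rewrite leNgt; apply/negP => hlt.
  have := cheb d0 n0 (ltW hlt).
  set z := d ^+ 2 * n%:R in hn *.
  have z0 : 0 < z by lra.
  have w0 : 0 < z^-1 by rewrite invr_gt0.
  have zw : z * z^-1 = 1 by rewrite mulfV // gt_eqF.
  have := mulr_gt0 w0 (_ : 0 < z - 2); last by lra.
Qed.

Lemma liminf_bounds (u : R^nat) (a b : R) N :
  (forall n, 0 <= u n <= 1) -> (forall n, (N <= n)%N -> a <= u n <= b) ->
  a <= limn_inf u <= b.
Proof.
move=> h01 hab.
have lb : has_lbound (range u) by exists 0 => _ [n _ <-]; case/andP: (h01 n).
have ub : has_ubound (range u) by exists 1 => _ [n _ <-]; case/andP: (h01 n).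
have lbs k : has_lbound (sdrop u k) by apply: has_lbound_sdrop.
have infs_le k m : (k <= m)%N -> infs u k <= u m.
  by move=> km; apply: ge_inf => //; exists m.
have ubi : has_ubound (range (infs u)).
  by exists 1 => _ [n _ <-]; apply: le_trans (infs_le n n (leqnn n)) _; case/andP: (h01 n).
have -> : limn_inf u = sup (range (infs u)).
  by apply/cvg_lim => //; exact: cvg_infs_sup.
apply/andP; split.
- apply: (@le_trans _ _ (infs u N)).
    apply: lb_le_inf; first by exists (u N); exists N => /=.
    by move=> _ [m /= Nm <-]; case/andP: (hab m Nm).
  by apply: ub_le_sup => //; exists N.
- apply: ge_sup; first by exists (infs u 0); exists 0%N.
  move=> _ [k _ <-]; apply: (le_trans (infs_le k (maxn k N) (leq_maxl _ _))).
  by case/andP: (hab (maxn k N) (leq_maxr _ _)).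
Qed.

Lemma frac01 x n : (x <= n)%N -> 0 <= (x%:R / n%:R : R) <= 1.
Proof.
move=> xn; rewrite divr_ge0 ?ler0n //=.
case: n xn => [|n] xn; first by rewrite invr0 mulr0.
by rewrite ler_pdivrMr ?ltr0n // mul1r ler_nat.
Qed.

Lemma frac_up x n (c : R) : 0 <= c -> x%:R <= c * n%:R -> x%:R / n%:R <= c.
Proof.
move=> c0 h; case: n h => [|n] h; first by rewrite invr0 mulr0.
by rewrite ler_pdivrMr ?ltr0n // mulrC.
Qed.

Lemma frac_low x n (c : R) : (0 < n)%N -> c * n%:R <= x%:R -> c <= x%:R / n%:R.
Proof. by move=> n0 h; rewrite ler_pdivlMr ?ltr0n. Qed.

Lemma one_minus_ge0 : 0 <= 1 - Q^-1 :> R.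
Proof.
rewrite subr_ge0 invf_le1 ?Q_gt0 //; have := Q_ge2; lra.
Qed.

Definition Nd (d : R) : nat := (Num.trunc (2 / d ^+ 2)).+1.

Lemma Nd_spec (d : R) n : 0 < d -> (Nd d <= n)%N -> 2 < d ^+ 2 * n%:R.
Proof.
move=> d0 hn; have d2 : 0 < d ^+ 2 by rewrite exprn_gt0.
have := truncnS_gt (2 / d ^+ 2); rewrite -/(Nd d) => h.
have h2 : (Nd d)%:R <= (n%:R : R) by rewrite ler_nat.
rewrite mulrC -ltr_pdivrMr //; lra.
Qed.

Lemma ess_bounds eps (d : R) : 0 <= eps -> eps < 2^-1 -> 0 < d ->
  1 - Q^-1 - d <= shift_ess_cov_radius (rep_system q) (full_shift q) (@uniform_marginal R q) eps
  <= 1 - Q^-1.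
Proof.
move=> e0 e2 d0; apply: (liminf_bounds (N := Nd d)).
- move=> n; apply: frac01; apply: leq_trans (E_le_R n e0) (cov_le_n n).
- move=> n hn; have h2 := Nd_spec d0 hn.
  have n0 : (0 < n)%N by case: n hn h2 => // ; rewrite mulr0 => _ h; lra.
  apply/andP; split.
    by apply: frac_low => //; exact: E_lower.
  apply: frac_up; first exact: one_minus_ge0.
  apply: le_trans (Rc_real n); rewrite ler_nat; exact: E_le_R.
Qed.

Lemma cov_bounds (d : R) : 0 < d ->
  1 - Q^-1 - d <= shift_cov_radius R (rep_system q) (full_shift q) <= 1 - Q^-1.
Proof.
move=> d0; apply: (liminf_bounds (N := Nd d)).
- by move=> n; apply: frac01; exact: cov_le_n.
- move=> n hn; have h2 := Nd_spec d0 hn.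
  have n0 : (0 < n)%N by case: n hn h2 => // ; rewrite mulr0 => _ h; lra.
  apply/andP; split.
    apply: frac_low => //; apply: le_trans (E_lower (eps := 0) d0 _ h2) _.
      by rewrite invr_gt0.
    by rewrite ler_nat; apply: E_le_R.
  by apply: frac_up; [exact: one_minus_ge0 | exact: Rc_real].
Qed.

End Comb.

Theorem proposition17 (R : realType) (q : nat) (hq : (2 <= q)%N) :
  (@shift_ess_cov_radius R q (rep_system q) (full_shift q) (@uniform_marginal R q) eps
     @[eps --> 0%R^'+] --> (1 - q%:R^-1 : R^o))
  /\ @shift_cov_radius R q (rep_system q) (full_shift q) = 1 - q%:R^-1.
Proof.
split.
- apply/cvgrPdist_le => e e0.
  near=> eps.
  have ep : 0 < eps by near: eps; exact: nbhs_right_gt.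
  have e2 : eps < 2^-1 by near: eps; apply: nbhs_right_lt; rewrite invr_gt0.
  have /andP[h1 h2] := @ess_bounds q hq R eps e (ltW ep) e2 e0.
  rewrite ler_norml; apply/andP; split; lra.
- apply/le_anti/andP; split.
    by have /andP[_ ->] := @cov_bounds q hq R 1 ltr01.
  apply/ler_addgt0Pr => d d0.
  have /andP[h _] := @cov_bounds q hq R d d0; lra.
Unshelve. all: by end_near.
Qed.
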